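(* Let $t\in\Lambda_s$ be a simple term such that $t\frown t$. Then $t$ is in $\mathsf{r}$-normal form if and only if $t$ is a resource approximant.
   Context: Call-by-value resource calculus. Resource values $u,v::=x\mid \lambda x.t$; simple terms $s,t::= st\mid [v_1,\dots,v_k]$ ($k\ge0$, bags are finite multisets); $\Lambda_s$ is the set of simple terms. The reduction $\to_{\mathsf{r}}$ is the contextual closure (extended to finite sets of terms) of the rules: $(\beta_r)$ $[\lambda x.t][v_1,\dots,v_n]\to t\langle v_1,\dots,v_n/x\rangle$ (the set of all ways of linearly substituting the $v_i$ for the free occurrences of $x$, empty if the number of occurrences differs from $n$); $(0)$ $[v_1,\dots,v_n]\,t\to\emptyset$ when $n\neq1$; $(\sigma_1)$ $[\lambda x.t]s_1s_2\to[\lambda x.ts_2]s_1$ if $x\notin FV(s_1)$; $(\sigma_3)$ $[v]([\lambda x.t]s)\to[\lambda x.[v]t]s$ if $x\notin FV(v)$. The coherence relation $\frown$ on resource terms is the smallest relation such that: $x\frown x$; $\lambda x.s\frown\lambda x.t$ whenever $s\frown t$; $[v_1,\dots,v_k]\frown[v_{k+1},\dots,v_n]$ whenever $v_i\frown v_j$ for all $i,j\le n$; $s_1t_1\frown s_2t_2$ whenever $s_1\frown s_2$ and $t_1\frown t_2$. Resource approximants are the simple terms generated by ($k,n\ge0$): $a::=b\mid c$; $b::=[x^n]\mid[\lambda x.a_1,\dots,\lambda x.a_n]\mid [x]\,b\,a_1\cdots a_k$; $c::=[\lambda x.a]([y]\,b\,a_1\cdots a_k)$, where $[x^n]$ is the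 bag with $n$ copies of $x$. *)

(* Defs.v *)
(* Call-by-value resource calculus, locally nameless-free:
   de Bruijn indices (terms are identified up to alpha-equivalence). *)
From Stdlib Require Import List Arith Permutation.
Import ListNotations.

(* simple terms  s,t ::= s t | [v1,...,vk]   (bags represented by lists;
   every predicate below is invariant under permutation of bag elements)
   resource values u,v ::= x | \x.t *)
Inductive term : Type :=
| App : term -> term -> term
| Bag : list value -> term
with value : Type :=
| Var : nat -> value
| Lam : term -> value.

Fixpoint lift_t (c : nat) (t : term) : term :=
  match t with
  | App s u => App (lift_t c s) (lift_t c u)
  | Bag vs => Bag ((fix go (l : list value) : list value :=
                      match l with
                      | [] => []
                      | v :: l' => lift_v c v :: go l'
                      end) vs)
  end
with lift_v (c : nat) (v : value) : value :=
  match v with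
  | Var n => Var (if c <=? n then S n else n)
  | Lam t => Lam (lift_t (S c) t)
  end.

(* Linear substitution: [lsub_t k t vs u] means u is one of the terms in
   t<vs/x>, where x is the de Bruijn index k (k binders deep).  Each value of
   the multiset vs replaces exactly one occurrence of x (the set is empty if
   the number of occurrences differs from the length of vs). *)
Inductive lsub_t : nat -> term -> list value -> term -> Prop :=
| ls_app k s u vs vs1 vs2 s' u' :
    Permutation vs (vs1 ++ vs2) -> lsub_t k s vs1 s' -> lsub_t k u vs2 u' ->
    lsub_t k (App s u) vs (App s' u')
| ls_nil k : lsub_t k (Bag []) [] (Bag [])
| ls_cons k w ws vs vs1 vs2 w' ws' :
    Permutation vs (vs1 ++ vs2) -> lsub_v k w vs1 w' ->
    lsub_t k (Bag ws) vs2 (Bag ws') ->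
    lsub_t k (Bag (w :: ws)) vs (Bag (w' :: ws'))
with lsub_v : nat -> value -> list value -> value -> Prop :=
| ls_hit k v : lsub_v k (Var k) [v] (Nat.iter k (lift_v 0) v)
| ls_miss k n : n <> k ->
    lsub_v k (Var n) [] (Var (if k <? n then n - 1 else n))
| ls_lam k t vs t' : lsub_t (S k) t vs t' -> lsub_v k (Lam t) vs (Lam t').

(* One-step r-reduction of a term to a finite set (list) of terms:
   root rules (beta_r), (0), (sigma_1), (sigma_3) and contextual closure. *)
Inductive red : term -> list term -> Prop :=
| r_beta t vs T :
    (forall u, In u T <-> lsub_t 0 t vs u) ->
    red (App (Bag [Lam t]) (Bag vs)) T
| r_zero vs u : length vs <> 1 -> red (App (Bag vs) u) []
| r_sigma1 t s1 s2 :
    red (App (App (Bag [Lam t]) s1) s2)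
        [App (Bag [Lam (App t (lift_t 0 s2))]) s1]
| r_sigma3 v t s :
    red (App (Bag [v]) (App (Bag [Lam t]) s))
        [App (Bag [Lam (App (Bag [lift_v 0 v]) t)]) s]
| r_appl s u S : red s S -> red (App s u) (map (fun s' => App s' u) S)
| r_appr s u U : red u U -> red (App s u) (map (fun u' => App s u') U)
| r_bag vs1 t vs2 T :
    red t T ->
    red (Bag (vs1 ++ Lam t :: vs2)) (map (fun t' => Bag (vs1 ++ Lam t' :: vs2)) T).

Definition r_normal (t : term) : Prop := forall T, ~ red t T.

Inductive coh_t : term -> term -> Prop :=
| coh_app s1 t1 s2 t2 :
    coh_t s1 s2 -> coh_t t1 t2 -> coh_t (App s1 t1) (App s2 t2)
| coh_bag vs ws :
    (forall v w, In v (vs ++ ws) -> In w (vs ++ ws) -> coh_v v w) ->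
    coh_t (Bag vs) (Bag ws)
with coh_v : value -> value -> Prop :=
| coh_var x : coh_v (Var x) (Var x)
| coh_lam s t : coh_t s t -> coh_v (Lam s) (Lam t).

(* resource approximants:
   a ::= b | c
   b ::= [x^n] | [\x.a1,...,\x.an] | [x] b a1 ... ak   (the last: neu)
   c ::= [\x.a] ([y] b a1 ... ak) *)
Inductive approx : term -> Prop :=
| ap_b t : approx_b t -> approx t
| ap_c a n : approx a -> neu n -> approx (App (Bag [Lam a]) n)
with approx_b : term -> Prop :=
| ab_vars n x : approx_b (Bag (repeat (Var x) n))
| ab_lams l : (forall a, In a l -> approx a) -> approx_b (Bag (map Lam l))
| ab_neu n : neu n -> approx_b n
with neu : term -> Prop :=
| neu_head x b : approx_b b -> neu (App (Bag [Var x]) b)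
| neu_app n a : neu n -> approx a -> neu (App n a).

(* Main.v *)
Require Import Defs.
From Stdlib Require Import List Arith Permutation Lia.
Import ListNotations.

Definition fin {A} (P : A -> Prop) := exists T : list A, forall x, In x T <-> P x.

Lemma fin_ext {A} (P Q : A -> Prop): (forall x, P x <-> Q x) -> fin P -> fin Q.
Proof. intros H [T HT]. exists T. intros x. rewrite HT. apply H. Qed.

Lemma fin_nil {A} (P : A -> Prop) : (forall x, ~ P x) -> fin P.
Proof. intros H. exists []. intros x; simpl; split; [tauto| apply H]. Qed.

Lemma fin_one {A} (a : A) (P : A -> Prop) : (forall x, P x <-> x = a) -> fin P.
Proof. intros H. exists [a]. intros x; simpl; rewrite H; split; [intros [->|[]]; auto| intros ->; auto]. Qed.

Lemma fin_map {A B} (f : A -> B) (P : A -> Prop) : fin P -> fin (fun y => exists x, P x /\ y = f x).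
Proof.
  intros [T HT]. exists (map f T). intros y. rewrite in_map_iff. split.
  - intros [x [<- Hx]]. exists x. split; [apply HT; auto| reflexivity].
  - intros [x [Hx ->]]. exists x. split; [reflexivity| apply HT; auto].
Qed.

Lemma fin_map2 {A B C} (f : A -> B -> C) P Q : fin P -> fin Q ->
  fin (fun z => exists x y, P x /\ Q y /\ z = f x y).
Proof.
  intros [TP HP] [TQ HQ]. exists (flat_map (fun x => map (f x) TQ) TP).
  intros z. rewrite in_flat_map. split.
  - intros [x [Hx Hz]]. apply in_map_iff in Hz as [y [<- Hy]].
    exists x, y. rewrite <- HP, <- HQ. auto.
  - intros [x [y [Hx [Hy ->]]]]. exists x. split; [apply HP; auto|].
    apply in_map. apply HQ; auto.
Qed.

Lemma fin_union_list {I A} (L : list I) (P : I -> A -> Prop) :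
  (forall i, In i L -> fin (P i)) -> fin (fun x => exists i, In i L /\ P i x).
Proof.
  induction L as [|i L IH]; intros H.
  - apply fin_nil. intros x [i [[] _]].
  - destruct (H i (or_introl eq_refl)) as [T1 H1].
    destruct IH as [T2 H2]. { intros j Hj. apply H; right; auto. }
    exists (T1 ++ T2). intros x. rewrite in_app_iff, H1, H2. split.
    + intros [Hx|[j [Hj Hx]]]. exists i; simpl; auto. exists j; simpl; auto.
    + intros [j [[<-|Hj] Hx]]; auto. right; exists j; auto.
Qed.

Fixpoint splits {A} (l : list A) : list (list A * list A) :=
  match l with
  | [] => [([], [])]
  | x :: r => flat_map (fun p => [(x :: fst p, snd p); (fst p, x :: snd p)]) (splits r)
  end.

Lemma splits_perm {A} (l : list A) p : In p (splits l) -> Permutation l (fst p ++ snd p).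
Proof.
  induction l as [|x r IH] in p |- *; simpl.
  - intros [<-|[]]; simpl; constructor.
  - intros H. apply in_flat_map in H as [p0 [Hp0 Hin]]. simpl in Hin.
    destruct Hin as [<-|[<-|[]]]; simpl.
    + apply perm_skip, IH; auto.
    + eapply Permutation_trans; [apply perm_skip, IH; eauto | apply Permutation_middle].
Qed.

Lemma splits_complete {A} (l a b : list A) : Permutation l (a ++ b) ->
  exists p, In p (splits l) /\ Permutation a (fst p) /\ Permutation b (snd p).
Proof.
  induction l as [|x r IH] in a, b |- *; intros HP.
  - apply Permutation_nil in HP. apply app_eq_nil in HP as [-> ->].
    exists ([], []). simpl. auto.
  - assert (Hx : In x (a ++ b)) by (eapply Permutation_in; [exact HP| left; auto]).
    apply in_app_or in Hx as [Hx|Hx].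
    + apply in_split in Hx as [a1 [a2 ->]].
      rewrite <- app_assoc in HP. simpl in HP.
      apply Permutation_cons_app_inv in HP. rewrite app_assoc in HP.
      destruct (IH _ _ HP) as [p0 [Hp0 [Ha Hb]]].
      exists (x :: fst p0, snd p0). simpl. split; [|split; auto].
      * apply in_flat_map. exists p0. split; auto. left; auto.
      * eapply Permutation_trans; [apply Permutation_sym, Permutation_middle|].
        apply perm_skip; auto.
    + apply in_split in Hx as [b1 [b2 ->]].
      rewrite app_assoc in HP.
      apply Permutation_cons_app_inv in HP. rewrite <- app_assoc in HP.
      destruct (IH _ _ HP) as [p0 [Hp0 [Ha Hb]]].
      exists (fst p0, x :: snd p0). simpl. split; [|split; auto].
      * apply in_flat_map. exists p0. split; auto. right; left; auto.
      * eapply Permutation_trans; [apply Permutation_sym, Permutation_middle|].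
        apply perm_skip; auto.
Qed.

Lemma lsub_t_perm k t vs u vs' : lsub_t k t vs u -> Permutation vs vs' -> lsub_t k t vs' u.
Proof.
  intros H P; inversion H; subst.
  - eapply ls_app; [eapply Permutation_trans; [apply Permutation_sym; exact P| eassumption] | eassumption | eassumption].
  - apply Permutation_nil in P; subst; constructor.
  - eapply ls_cons; [eapply Permutation_trans; [apply Permutation_sym; exact P| eassumption] | eassumption | eassumption].
Qed.

Lemma lsub_v_perm k t vs u vs' : lsub_v k t vs u -> Permutation vs vs' -> lsub_v k t vs' u.
Proof.
  intros H P; inversion H; subst.
  - apply Permutation_length_1_inv in P; subst; constructor.
  - apply Permutation_nil in P; subst; constructor; auto.
  - constructor. eapply lsub_t_perm; eauto.
Qed.

Lemma lsub_bag_shape k ws vs y : lsub_t k (Bag ws) vs y -> exists ws', y = Bag ws'.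
Proof. intros H; inversion H; subst; eauto. Qed.

Lemma fin_app s u : (forall k vs, fin (lsub_t k s vs)) -> (forall k vs, fin (lsub_t k u vs)) ->
  forall k vs, fin (lsub_t k (App s u) vs).
Proof.
  intros Hs Hu k vs.
  apply (fin_ext (fun r => exists p, In p (splits vs) /\
    (fun p r => exists s' u', lsub_t k s (fst p) s' /\ lsub_t k u (snd p) u' /\ r = App s' u') p r)).
  - intros r. split.
    + intros [p [Hp [s' [u' [H1 [H2 ->]]]]]]. eapply ls_app; eauto. apply splits_perm; auto.
    + intros H. inversion H; subst.
      match goal with HP : Permutation vs _ |- _ => destruct (splits_complete _ _ _ HP) as [p [Hp [Ha Hb]]] end.
      exists p. split; auto. exists s', u'. split; [|split; auto]; eapply lsub_t_perm; eauto.
  - apply fin_union_list. intros p _. apply fin_map2; auto.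
Qed.

Lemma fin_bnil : forall k vs, fin (lsub_t k (Bag []) vs).
Proof.
  intros k [|v vs].
  - apply (fin_one (Bag [])). intros x; split; [intros H; inversion H; auto| intros ->; constructor].
  - apply fin_nil. intros x H; inversion H.
Qed.

Definition consbag (w : value) (y : term) : term :=
  match y with Bag l => Bag (w :: l) | App _ _ => App (Bag []) (Bag []) end.

Lemma fin_bcons w ws : (forall k vs, fin (lsub_v k w vs)) -> (forall k vs, fin (lsub_t k (Bag ws) vs)) ->
  forall k vs, fin (lsub_t k (Bag (w :: ws)) vs).
Proof.
  intros Hw Hws k vs.
  apply (fin_ext (fun r => exists p, In p (splits vs) /\
    (fun p r => exists w' y, lsub_v k w (fst p) w' /\ lsub_t k (Bag ws) (snd p) y /\ r = consbag w' y) p r)).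
  - intros r. split.
    + intros [p [Hp [w' [y [H1 [H2 ->]]]]]].
      destruct (lsub_bag_shape _ _ _ _ H2) as [ws' ->]. simpl.
      eapply ls_cons; eauto. apply splits_perm; auto.
    + intros H. inversion H; subst.
      match goal with HP : Permutation vs _ |- _ => destruct (splits_complete _ _ _ HP) as [p [Hp [Ha Hb]]] end.
      exists p. split; auto. exists w', (Bag ws'). split; [|split; auto].
      * eapply lsub_v_perm; eauto.
      * eapply lsub_t_perm; eauto.
  - apply fin_union_list. intros p _. apply fin_map2; auto.
Qed.

Lemma fin_var n : forall k vs, fin (lsub_v k (Var n) vs).
Proof.
  intros k vs. destruct (Nat.eq_dec n k) as [->|Hne].
  - destruct vs as [|v [|v' vs]].
    + apply fin_nil; intros x H; inversion H; congruence.
    + apply (fin_one (Nat.iter k (lift_v 0) v)). intros x; split.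
      * intros H; inversion H; subst; auto; congruence.
      * intros ->; constructor.
    + apply fin_nil; intros x H; inversion H.
  - destruct vs as [|v vs].
    + apply (fin_one (Var (if k <? n then n - 1 else n))). intros x; split.
      * intros H; inversion H; subst; auto.
      * intros ->; constructor; auto.
    + apply fin_nil; intros x H; inversion H; subst; congruence.
Qed.

Lemma fin_lam t : (forall k vs, fin (lsub_t k t vs)) -> forall k vs, fin (lsub_v k (Lam t) vs).
Proof.
  intros Ht k vs.
  apply (fin_ext (fun y => exists x, lsub_t (S k) t vs x /\ y = Lam x)).
  - intros y; split.
    + intros [x [H ->]]; constructor; auto.
    + intros H; inversion H; subst; eauto.
  - apply fin_map; auto.
Qed.

Fixpoint fin_t (t : term) {struct t} : forall k vs, fin (lsub_t k t vs) :=
  match t with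
  | App s u => fin_app s u (fin_t s) (fin_t u)
  | Bag ws => (fix go (ws : list value) : forall k vs, fin (lsub_t k (Bag ws) vs) :=
                 match ws with
                 | [] => fin_bnil
                 | w :: ws' => fin_bcons w ws' (fin_v w) (go ws')
                 end) ws
  end
with fin_v (v : value) {struct v} : forall k vs, fin (lsub_v k v vs) :=
  match v with
  | Var n => fin_var n
  | Lam t => fin_lam t (fin_t t)
  end.

Definition root_redex s u :=
  (exists t vs, s = Bag [Lam t] /\ u = Bag vs) \/
  (exists vs, s = Bag vs /\ length vs <> 1) \/
  (exists t s1, s = App (Bag [Lam t]) s1) \/
  (exists v t s', s = Bag [v] /\ u = App (Bag [Lam t]) s').

Lemma app_normal_iff s u : r_normal (App s u) <-> r_normal s /\ r_normal u /\ ~ root_redex s u.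
Proof.
  split.
  - intros H. split; [|split].
    + intros S HS. eapply H. apply r_appl. exact HS.
    + intros S HS. eapply H. apply r_appr. exact HS.
    + intros [ [t [vs [-> ->]]] | [ [vs [-> Hl]] | [ [t [s1 ->]] | [v [t [s' [-> ->]]]] ] ] ].
      * destruct (fin_t t 0 vs) as [T HT]. eapply H; apply r_beta; exact HT.
      * eapply H; apply r_zero; exact Hl.
      * eapply H; apply r_sigma1.
      * eapply H; apply r_sigma3.
  - intros [Hs [Hu Hr]] T HT. inversion HT; subst.
    + apply Hr; left; do 2 eexists; split; reflexivity.
    + apply Hr; right; left; eexists; split; [reflexivity| auto].
    + apply Hr; right; right; left; do 2 eexists; reflexivity.
    + apply Hr; right; right; right; do 3 eexists; split; reflexivity.
    + eapply Hs; eauto.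
    + eapply Hu; eauto.
Qed.

Lemma bag_normal_iff vs : r_normal (Bag vs) <-> forall t, In (Lam t) vs -> r_normal t.
Proof.
  split.
  - intros H t Hin T HT. apply in_split in Hin as [l1 [l2 ->]]. eapply H. apply r_bag. exact HT.
  - intros H T HT. inversion HT; subst. eapply H; [|eassumption].
    apply in_or_app; right; left; reflexivity.
Qed.

Fixpoint size_t (t : term) : nat :=
  match t with
  | App s u => S (size_t s + size_t u)
  | Bag vs => S ((fix go (l : list value) : nat :=
                   match l with [] => 0 | v :: l' => size_v v + go l' end) vs)
  end
with size_v (v : value) : nat :=
  match v with Var _ => 1 | Lam t => S (size_t t) end.

Lemma size_in t vs : In (Lam t) vs -> size_t t < size_t (Bag vs).
Proof.
  induction vs as [|v vs IH]; simpl; [tauto|].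
  intros [->|H]. simpl; lia. specialize (IH H). simpl in IH. lia.
Qed.

Lemma coh_app_inv s u : coh_t (App s u) (App s u) -> coh_t s s /\ coh_t u u.
Proof. intros H; inversion H; auto. Qed.

Lemma coh_bag_inv vs : coh_t (Bag vs) (Bag vs) -> forall v w, In v vs -> In w vs -> coh_v v w.
Proof. intros H v w Hv Hw; inversion H; subst. apply H2; apply in_or_app; left; auto. Qed.

Lemma coh_lam_self t : coh_v (Lam t) (Lam t) -> coh_t t t.
Proof. intros H; inversion H; auto. Qed.

Lemma coh_bag_shape vs : (forall v w, In v vs -> In w vs -> coh_v v w) ->
  (exists x n, vs = repeat (Var x) n) \/ (exists l, vs = map Lam l).
Proof.
  intros H. destruct vs as [|v0 vs'].
  - left; exists 0, 0; reflexivity.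
  - destruct v0 as [x|a].
    + left. exists x. exists (length (Var x :: vs')).
      assert (Hw : forall w, In w (Var x :: vs') -> w = Var x).
      { intros w Hw. specialize (H _ _ (or_introl eq_refl) Hw). inversion H; auto. }
      clear H. induction (Var x :: vs') as [|w l IH]; simpl; auto.
      rewrite (Hw w (or_introl eq_refl)). f_equal. apply IH. intros; apply Hw; right; auto.
    + right.
      assert (Hw : forall w, In w (Lam a :: vs') -> exists t, w = Lam t).
      { intros w Hw. specialize (H _ _ (or_introl eq_refl) Hw). inversion H; eauto. }
      clear H. induction (Lam a :: vs') as [|w l IH].
      * exists []; reflexivity.
      * destruct (Hw w (or_introl eq_refl)) as [t ->].
        destruct IH as [l' ->]. intros; apply Hw; right; auto.
        exists (t :: l'); reflexivity.
Qed.

Lemma forward : forall n t, size_t t < n -> coh_t t t -> r_normal t -> approx t.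
Proof.
  induction n; intros t Hs Hc Hn; [lia|].
  destruct t as [s u | vs].
  - apply coh_app_inv in Hc as [Hcs Hcu].
    apply app_normal_iff in Hn as [Hns [Hnu Hr]]. simpl in Hs.
    assert (As : approx s) by (apply IHn; auto; lia).
    assert (Au : approx u) by (apply IHn; auto; lia).
    destruct s as [s1 s2 | vs].
    + inversion As; subst.
      * inversion H; subst. apply ap_b, ab_neu, neu_app; assumption.
      * exfalso; apply Hr; right; right; left; do 2 eexists; reflexivity.
    + destruct vs as [|v [|v' vs]].
      * exfalso; apply Hr; right; left; exists []; split; [reflexivity|simpl; lia].
      * destruct v as [x | a].
        -- inversion Au; subst.
           ++ apply ap_b, ab_neu, neu_head; assumption.
           ++ exfalso; apply Hr; right; right; right; do 3 eexists; split; reflexivity.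
        -- assert (Ha : approx a).
           { apply IHn.
             - pose proof (size_in a [Lam a] (or_introl eq_refl)). lia.
             - apply coh_lam_self. apply (coh_bag_inv _ Hcs); left; auto.
             - apply (proj1 (bag_normal_iff _) Hns). left; auto. }
           inversion Au; subst.
           ++ inversion H; subst.
              ** exfalso; apply Hr; left; do 2 eexists; split; reflexivity.
              ** exfalso; apply Hr; left; do 2 eexists; split; reflexivity.
              ** apply ap_c; assumption.
           ++ exfalso; apply Hr; right; right; right; do 3 eexists; split; reflexivity.
      * exfalso; apply Hr; right; left; eexists; split; [reflexivity| simpl; lia].
  - pose proof (coh_bag_inv _ Hc) as Hcv.
    destruct (coh_bag_shape _ Hcv) as [[x [m E]]|[l E]]; subst.
    + apply ap_b, ab_vars.
    + apply ap_b, ab_lams. intros b Hb.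
      assert (Hin : In (Lam b) (map Lam l)) by (apply in_map; auto).
      apply IHn.
      * pose proof (size_in _ _ Hin). lia.
      * apply coh_lam_self. apply Hcv; exact Hin.
      * apply (proj1 (bag_normal_iff _) Hn). exact Hin.
Qed.

Scheme approx_mut := Induction for approx Sort Prop
with approx_b_mut := Induction for approx_b Sort Prop
with neu_mut := Induction for neu Sort Prop.

Lemma backward : forall t, approx t -> r_normal t.
Proof.
  apply (approx_mut (fun t _ => r_normal t)
                    (fun t _ => r_normal t /\ forall a s, t <> App (Bag [Lam a]) s)
                    (fun t _ => r_normal t /\ exists s u, t = App s u /\ forall a, s <> Bag [Lam a])).
  - intros t _ [H _]; exact H.
  - intros a n _ Ha _ [Hn [s [u [-> Hs]]]]. apply app_normal_iff. split; [|split].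
    + apply bag_normal_iff. intros t [E|[]]. injection E as ->. exact Ha.
    + exact Hn.
    + intros [ [t [vs [E1 E2]]] | [ [vs [E1 E2]] | [ [t [s1 E]] | [v [t [s' [E1 E2]]]] ] ] ];
        try discriminate.
      * injection E1 as <-. simpl in E2. congruence.
      * injection E2 as E2 _. apply (Hs t E2).
  - intros m x. split.
    + apply bag_normal_iff. intros t Hin. apply repeat_spec in Hin. discriminate.
    + intros a s E; discriminate.
  - intros l _ IH. split.
    + apply bag_normal_iff. intros t Hin. apply in_map_iff in Hin as [b [E Hb]].
      injection E as ->. apply IH; auto.
    + intros a s E; discriminate.
  - intros n _ [Hn [s [u [-> Hs]]]]. split; auto.
    intros a s0 E. injection E as E1 E2. apply (Hs a); auto.
  - intros x b _ [Hb Hnla]. split.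
    + apply app_normal_iff. split; [|split].
      * apply bag_normal_iff. intros t [E|[]]; discriminate.
      * exact Hb.
      * intros [ [t [vs [E1 E2]]] | [ [vs [E1 E2]] | [ [t [s1 E]] | [v [t [s' [E1 E2]]]] ] ] ];
          try discriminate.
        -- injection E1 as <-. simpl in E2. congruence.
        -- apply (Hnla t s' E2).
    + exists (Bag [Var x]), b. split; [reflexivity| intros a E; discriminate].
  - intros n a _ [Hn [s [u [-> Hs]]]] _ Ha. split.
    + apply app_normal_iff. split; [|split].
      * exact Hn.
      * exact Ha.
      * intros [ [t [vs [E1 E2]]] | [ [vs [E1 E2]] | [ [t [s1 E]] | [v [t [s' [E1 E2]]]] ] ] ];
          try discriminate.
        injection E as E _. apply (Hs t E).
    + exists (App s u), a. split; [reflexivity| intros a0 E; discriminate].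
Qed.

Theorem lemma3p16 (t : term) :
  coh_t t t -> (r_normal t <-> approx t).
Proof.
  intros Hc. split.
  - intros Hn. eapply forward; eauto.
  - apply backward.
Qed.
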